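(* Let $H=\sum_{k=1}^{m}\mathbb{Z}u_{k}$ with $u_k\in\mathbb{R}^n$, labelled so that $u_1,\dots,u_p$ is a basis of $\mathrm{vect}(H)$. Then for every $P\in GL(n,\mathbb{R})$, $L(M_H)=L(M_{P(H)})$, where $M_{P(H)}$ is computed from the ordered generating family $(Pu_1,\dots,Pu_m)$ of $P(H)$. In particular $\widetilde{\mathrm{dim}}(\overline{H})=\widetilde{\mathrm{dim}}(\overline{P(H)})$.
   Context: $\mathrm{vect}(A)$ is the real span of $A$; bars denote closure. Complex dimension: for an additive subgroup $G$ of $\mathbb{R}^n$, $\widetilde{\mathrm{dim}}(G):=p+i(s-p)$, $p=\max\{\dim V: V\text{ a vector subspace},\ V\subset G\}$, $s=\dim\mathrm{vect}(G)$. Definition of $L(M_G)$ for an ordered generating family $w_1,\dots,w_m$ of $G$ whose first $q$ members form a basis of $\mathrm{vect}(G)$: for $k=q+1,\dots,m$ write $w_k=\sum_{j=1}^q\alpha_{k,j}w_j$. Choose $I_k\subset\{1,\dots,q\}$ such that $\{1\}\cup\{\alpha_{k,i}:i\in I_k\}$ is a longest sublist of $1,\alpha_{k,1},\dots,\alpha_{k,q}$ linearly independent over $\mathbb{Q}$. For $j\notin I_k$ write $\alpha_{k,j}=t_{k,j}+\sum_{i\in I_k}\gamma^{(k)}_{j,i}\alpha_{k,i}$ with rational $t_{k,j},\gamma^{(k)}_{j,i}$. Choose $N\in\mathbb{N}^*$ with $m^{(k)}_{i,j}:=N\gamma^{(k)}_{i,j}\in\mathbb{Z}$, and put $w'_{k,j}=Nw_j+\sum_{i\notin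 I_k}m^{(k)}_{i,j}w_i$ for $j\in I_k$. $M_G$ is the matrix with columns all $w'_{k,j}$, and $L(M_G)=\mathrm{rank}(M_G)$. *)

(* Defs.v *)
From HB Require Import structures.
From mathcomp Require Import all_boot all_order all_algebra.
From mathcomp Require Import all_classical all_reals all_analysis.
From mathcomp Require Import complex.

Set Implicit Arguments.
Unset Strict Implicit.
Unset Printing Implicit Defensive.

Import Order.TTheory GRing.Theory Num.Theory.
Local Open Scope ring_scope.
Local Open Scope classical_set_scope.

Section Defs.
Variables (R : realType) (n : nat).
Implicit Types (G : set 'rV[R]_n).

(** The additive subgroup  sum_{k < m} Z w_k  of R^n (vectors are row vectors;
    indices are 0-based: w 0, ..., w (m-1)). *)
Definition zspan (w : nat -> 'rV[R]_n) (m : nat) : set 'rV[R]_n :=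
  [set x | exists z : nat -> int, x = \sum_(k < m) (w k) *~ z k].

(** V (a square matrix, read as its row space) is a vector subspace contained in G *)
Definition subspace_in G (V : 'M[R]_n) : Prop :=
  forall v : 'rV[R]_n, (v <= V)%MS -> G v.

Definition dimt_p G : nat :=
  \max_(r < n.+1 | `[< exists V : 'M[R]_n, subspace_in G V /\ \rank V = r >]) r.

Definition dimt_s G : nat :=
  \big[minn/n]_(r < n.+1 | `[< exists V : 'M[R]_n,
        (forall g, G g -> (g <= V)%MS) /\ \rank V = r >]) r.

Definition cdim G : R[i] := ((dimt_p G)%:R +i* ((dimt_s G - dimt_p G)%N)%:R)%C.

Definition prefix_basis (w : nat -> 'rV[R]_n) (m q : nat) : Prop :=
  [/\ (q <= m)%N,
      row_free (\matrix_(i < q) w i) &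
      forall k, (k < m)%N -> (w k <= \matrix_(i < q) w i)%MS].

Definition Qindep_on (I : finType) (x : I -> R) (S : {set I}) : Prop :=
  forall c : I -> rat, \sum_(i in S) ratr (c i) * x i = 0 ->
    forall i, i \in S -> c i = 0.

(** The list 1, a_0, ..., a_{q-1}, indexed by option 'I_q (None is the entry 1) *)
Definition one_alpha (q : nat) (a : 'I_q -> R) (o : option 'I_q) : R :=
  if o is Some j then a j else 1.

Record Mchoice (q : nat) := MChoice {
  mc_alpha : nat -> 'I_q -> R;
  mc_I     : nat -> {set 'I_q};
  mc_t     : nat -> 'I_q -> rat;
  mc_gamma : nat -> 'I_q -> 'I_q -> rat;
  mc_N     : nat;
  mc_m     : nat -> 'I_q -> 'I_q -> int
}.

Definition Mchoice_ok (w : nat -> 'rV[R]_n) (m q : nat) (d : Mchoice q) : Prop :=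
  (0 < mc_N d)%N /\
  forall k, (q <= k < m)%N ->
  let a := mc_alpha d k in
  let I := mc_I d k in
  let S := None |: (Some @: I) in
  [/\ w k = \sum_(j < q) a j *: w j,
      Qindep_on (one_alpha a) S,
      (forall S' : {set option 'I_q}, Qindep_on (one_alpha a) S' -> #|S'| <= #|S|)%N,
      (forall j, j \notin I ->
         a j = ratr (mc_t d k j) + \sum_(i in I) ratr (mc_gamma d k j i) * a i) &
      (forall i j, i \notin I -> j \in I ->
         ((mc_m d k i j)%:~R : rat) = (mc_N d)%:R * mc_gamma d k i j)].

Definition wprime (w : nat -> 'rV[R]_n) (q : nat) (d : Mchoice q) (k : nat) (j : 'I_q)
  : 'rV[R]_n :=
  (mc_N d)%:R *: w j + \sum_(i < q | i \notin mc_I d k) (mc_m d k i j)%:~R *: w i.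

(** L(M_G) = rank of the matrix whose columns are all the w'_{k,j}
    (q <= k < m, j in I_k), i.e. the dimension of their span. *)
Definition LM (w : nat -> 'rV[R]_n) (m q : nat) (d : Mchoice q) : nat :=
  \rank (\sum_(k < m | (q <= k)%N) \sum_(j < q | j \in mc_I d k)
            <<wprime w d k j>>)%MS.

End Defs.

(* Main.v *)
Require Import Defs.
From HB Require Import structures.
From mathcomp Require Import all_boot all_order all_algebra.
From mathcomp Require Import all_classical all_reals all_analysis.
From mathcomp Require Import complex.
From mathcomp Require Import ring lra.

Import numFieldNormedType.Exports.
Import Order.TTheory GRing.Theory Num.Theory.
Local Open Scope ring_scope.
Local Open Scope classical_set_scope.

Section Key.
Variables (R : realType) (p : nat) (a : 'I_p -> R).

Definition xco (I : {set 'I_p}) (g : 'I_p -> 'I_p -> rat) (j l : 'I_p) : R :=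
  if l == j then 1 else if l \in I then 0 else ratr (g l j).

Lemma sum_optS (I : {set 'I_p}) (F : option 'I_p -> R) :
  \sum_(o in None |: (Some @: I)) F o = F None + \sum_(j in I) F (Some j).
Proof.
rewrite big_setU1 /=; last by apply/imsetP => -[x _].
by rewrite big_imset //= => x y _ _ [].
Qed.

Lemma sum_xco (I : {set _}) (g : _ -> _ -> rat) (j : 'I_p) (y : 'I_p -> R) : j \in I ->
  \sum_l xco I g j l * y l = y j + \sum_(l | l \notin I) ratr (g l j) * y l.
Proof.
move=> jI; rewrite (bigD1 j) //= /xco eqxx mul1r; congr (_ + _).
rewrite (bigID (fun l => l \in I)) /= big1 ?add0r; last first.
  by move=> l /andP[/negPf -> ->]; rewrite mul0r.
rewrite (eq_bigl (fun l => l \notin I)); last first.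
  by move=> l; case: eqP => // ->; rewrite jI.
by apply: eq_bigr => l /negPf lI; rewrite lI; case: eqP => // e; rewrite e jI in lI.
Qed.

Lemma relA (I : {set 'I_p}) (t : 'I_p -> rat) (g : 'I_p -> 'I_p -> rat) :
  Qindep_on (one_alpha a) (None |: (Some @: I)) ->
  (forall j, j \notin I -> a j = ratr (t j) + \sum_(i in I) ratr (g j i) * a i) ->
  forall (r : 'I_p -> rat) (s : rat), \sum_i ratr (r i) * a i = ratr s ->
  forall j, j \in I -> \sum_l xco I g j l * ratr (r l) = 0.
Proof.
move=> ind ex r s rs j jI; rewrite sum_xco //.
pose c o := match o with
  | Some j => r j + \sum_(l | l \notin I) g l j * r l
  | None => - s + \sum_(l | l \notin I) r l * t l end.
suff H : c (Some j) = 0.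
  move: H; rewrite /= => /(congr1 (ratr : rat -> R)); rewrite rmorph0 rmorphD rmorph_sum => H.
  rewrite -[RHS]H; congr (_ + _).
  by apply: eq_bigr => l _; rewrite rmorphM.
apply: ind; last by apply/setU1P; right; apply/imsetP; exists j.
rewrite sum_optS /= mulr1.
have e1 : \sum_(j in I) ratr (r j + \sum_(l | l \notin I) g l j * r l) * a j
   = \sum_(j in I) ratr (r j) * a j + \sum_(l | l \notin I) ratr (r l) * (a l - ratr (t l)).
  have e2 : \sum_(l | l \notin I) ratr (r l) * (a l - ratr (t l)) =
     \sum_(l | l \notin I) \sum_(i in I) ratr (r l) * (ratr (g l i) * a i).
    by apply: eq_bigr => l lI; rewrite (ex l lI) addrC addKr mulr_sumr.
  rewrite e2.
  rewrite exchange_big /= -big_split /=; apply: eq_bigr => i _.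
  rewrite rmorphD mulrDl rmorph_sum mulr_suml; congr (_ + _).
  by apply: eq_bigr => l _; rewrite rmorphM mulrA [ratr (r l) * _]mulrC.
rewrite e1; under [X in _ + (_ + X)]eq_bigr do rewrite mulrBr.
rewrite sumrB.
have hs : \sum_(i in I) ratr (r i) * a i + \sum_(i | i \notin I) ratr (r i) * a i = ratr s.
  by rewrite -rs [RHS](bigID (fun i => i \in I)).
rewrite rmorphD rmorphN rmorph_sum; under eq_bigr do rewrite rmorphM.
lra.
Qed.

Lemma relB (I1 : {set 'I_p}) (t1 : 'I_p -> rat) (g1 : 'I_p -> 'I_p -> rat)
  (I2 : {set 'I_p}) (t2 : 'I_p -> rat) (g2 : 'I_p -> 'I_p -> rat) :
  Qindep_on (one_alpha a) (None |: (Some @: I1)) ->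
  (forall j, j \notin I1 -> a j = ratr (t1 j) + \sum_(i in I1) ratr (g1 j i) * a i) ->
  (forall j, j \notin I2 -> a j = ratr (t2 j) + \sum_(i in I2) ratr (g2 j i) * a i) ->
  forall i j, i \notin I2 -> j \in I1 ->
  xco I1 g1 j i = \sum_(l in I2) xco I1 g1 j l * ratr (g2 i l).
Proof.
move=> ind1 ex1 ex2 i j iI jI.
pose r l := if l == i then 1 else if l \in I2 then - g2 i l else 0.
have hr : forall y : 'I_p -> R,
    \sum_l y l * ratr (r l) = y i - \sum_(l in I2) y l * ratr (g2 i l).
  move=> y; rewrite (bigD1 i) //= /r eqxx rmorph1 mulr1; congr (_ + _).
  rewrite (bigID (fun l => l \in I2)) /= [X in _ + X]big1 ?addr0; last first.
    by move=> l /andP[/negPf-> /negPf->]; rewrite rmorph0 mulr0.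
  rewrite -sumrN; apply: eq_big => l.
    by case: eqP => // ->; rewrite (negPf iI).
  by move=> /andP[/negPf-> ->]; rewrite rmorphN mulrN.
have rs : \sum_l ratr (r l) * a l = ratr (t2 i).
  under eq_bigr do rewrite mulrC.
  rewrite hr (eq_bigr (fun l => ratr (g2 i l) * a l)); last by move=> l _; rewrite mulrC.
  by rewrite {1}(ex2 i iI) addrK.
have := @relA I1 t1 g1 ind1 ex1 _ _ rs j jI; rewrite hr => /eqP; rewrite subr_eq0 => /eqP.
by [].
Qed.

Lemma wprime_exp n (w : nat -> 'rV[R]_n) (d : Mchoice R p) k j :
  j \in mc_I d k ->
  (forall i, i \notin mc_I d k -> ((mc_m d k i j)%:~R : rat) = (mc_N d)%:R * mc_gamma d k i j) ->
  wprime w d k j = (mc_N d)%:R *: \sum_l xco (mc_I d k) (mc_gamma d k) j l *: w l.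
Proof.
move=> jI mm; rewrite /wprime [in RHS](bigD1 j) //= {1}/xco eqxx scale1r scalerDr; congr (_ + _).
rewrite [in RHS](bigID (fun l => l \in mc_I d k)) /= [X in X + _]big1 ?add0r; last first.
  by move=> l /andP[lj lI]; rewrite /xco (negPf lj) lI scale0r.
rewrite scaler_sumr; apply: eq_big => l.
  by case: eqP => // ->; rewrite jI.
move=> lI; have lj : (l == j) = false by apply/negP => /eqP e; rewrite e jI in lI.
rewrite /xco lj (negPf lI) scalerA.
have := congr1 (ratr : rat -> R) (mm l lI); rewrite rmorph_int rmorphM rmorph_nat => ->.
by [].
Qed.

Lemma coef_id n (w : nat -> 'rV[R]_n) (I1 : {set 'I_p}) (t1 : 'I_p -> rat) (g1 : 'I_p -> 'I_p -> rat)
  (I2 : {set 'I_p}) (t2 : 'I_p -> rat) (g2 : 'I_p -> 'I_p -> rat) :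
  Qindep_on (one_alpha a) (None |: (Some @: I1)) ->
  (forall j, j \notin I1 -> a j = ratr (t1 j) + \sum_(i in I1) ratr (g1 j i) * a i) ->
  (forall j, j \notin I2 -> a j = ratr (t2 j) + \sum_(i in I2) ratr (g2 j i) * a i) ->
  forall j, j \in I1 ->
  \sum_l xco I1 g1 j l *: w l =
  \sum_(j' in I2) xco I1 g1 j j' *: \sum_l xco I2 g2 j' l *: w l.
Proof.
move=> ind1 ex1 ex2 j jI.
under [RHS]eq_bigr do rewrite scaler_sumr.
rewrite exchange_big /=; apply: eq_bigr => l _.
under eq_bigr do rewrite scalerA.
rewrite -scaler_suml; congr (_ *: _).
have [lI2|lI2] := boolP (l \in I2).
  rewrite (bigD1 l) //= {3}/xco eqxx mulr1 big1 ?addr0 // => j' /andP[j'I /negPf lj'].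
  by rewrite [xco I2 g2 j' l]/xco eq_sym lj' lI2 mulr0.
rewrite (@relB I1 t1 g1 I2 t2 g2 ind1 ex1 ex2 l j lI2 jI).
apply: eq_bigr => j' j'I; congr (_ * _); rewrite /xco (negPf lI2).
by case: eqP => // e; rewrite e j'I in lI2.
Qed.

Lemma wprime_sub n (w : nat -> 'rV[R]_n) (d1 d2 : Mchoice R p) k :
  (0 < mc_N d2)%N ->
  Qindep_on (one_alpha a) (None |: (Some @: mc_I d1 k)) ->
  (forall j, j \notin mc_I d1 k -> a j = ratr (mc_t d1 k j) + \sum_(i in mc_I d1 k) ratr (mc_gamma d1 k j i) * a i) ->
  (forall j, j \notin mc_I d2 k -> a j = ratr (mc_t d2 k j) + \sum_(i in mc_I d2 k) ratr (mc_gamma d2 k j i) * a i) ->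
  (forall i j, i \notin mc_I d1 k -> j \in mc_I d1 k -> ((mc_m d1 k i j)%:~R : rat) = (mc_N d1)%:R * mc_gamma d1 k i j) ->
  (forall i j, i \notin mc_I d2 k -> j \in mc_I d2 k -> ((mc_m d2 k i j)%:~R : rat) = (mc_N d2)%:R * mc_gamma d2 k i j) ->
  forall j, j \in mc_I d1 k ->
  (wprime w d1 k j <= \sum_(j' < p | j' \in mc_I d2 k) <<wprime w d2 k j'>>)%MS.
Proof.
move=> N2 ind1 ex1 ex2 mm1 mm2 j jI.
rewrite (@wprime_exp _ w _ _ _ jI (fun i iI => mm1 i j iI jI)).
rewrite (@coef_id _ w _ _ _ _ _ _ ind1 ex1 ex2 _ jI).
apply: scalemx_sub; apply: summx_sub => j' j'I; apply: scalemx_sub.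
apply: (sumsmx_sup j') => //; rewrite genmxE.
rewrite (@wprime_exp _ w _ _ _ j'I (fun i iI => mm2 i j' iI j'I)).
have nz : ((mc_N d2)%:R : R) != 0 by rewrite pnatr_eq0 -lt0n.
by rewrite (eqmx_scale _ nz).
Qed.
End Key.

Definition Wsum (R : realType) n (w : nat -> 'rV[R]_n) m q (d : Mchoice R q) :=
  (\sum_(k < m | (q <= k)%N) \sum_(j < q | j \in mc_I d k) <<wprime w d k j>>)%MS.
Arguments Wsum {R n} w m {q} d.

Lemma wprime_mulmx (R : realType) n p (w w2 : nat -> 'rV[R]_n) (Q : 'M[R]_n) (d : Mchoice R p) k j :
  (forall j, (j < p)%N -> w2 j = w j *m Q) ->
  wprime w2 d k j = wprime w d k j *m Q.
Proof.
move=> hw; rewrite /wprime mulmxDl -scalemxAl hw //; congr (_ + _).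
rewrite mulmx_suml; apply: eq_bigr => i _; by rewrite hw // scalemxAl.
Qed.

Lemma Wsub (R : realType) n m p (w w2 : nat -> 'rV[R]_n) (Q : 'M[R]_n) (d1 d2 : Mchoice R p) :
  (forall j, (j < p)%N -> w2 j = w j *m Q) ->
  Mchoice_ok w m d1 -> Mchoice_ok w2 m d2 ->
  (forall k, (p <= k < m)%N -> mc_alpha d1 k = mc_alpha d2 k) ->
  (Wsum w2 m d2 <= Wsum w m d1 *m Q)%MS.
Proof.
move=> hw [N1 ok1] [_ ok2] ha.
apply/sumsmx_subP => k kp; apply/sumsmx_subP => j jI; rewrite genmxE.
rewrite (@wprime_mulmx _ _ _ w w2 Q d2 k j hw); apply: submxMr.
have km : (p <= k < m)%N by rewrite kp ltn_ord.
apply: (sumsmx_sup k) => //.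
move: (ok1 k km) (ok2 k km) => /= [_ ind1 _ ex1 mm1] [_ ind2 _ ex2 mm2].
rewrite -(ha k km) in ind2 ex2.
exact: (@wprime_sub _ _ (mc_alpha d1 k) _ w d2 d1 k N1 ind2 ex2 ex1 mm2 mm1 j jI).
Qed.

Lemma alpha_eq (R : realType) n m p (u : nat -> 'rV[R]_n) (P : 'M[R]_n) :
  P \in unitmx -> prefix_basis u m p -> forall (a1 a2 : 'I_p -> R) k,
  u k = \sum_j a1 j *: u j -> u k *m P = \sum_j a2 j *: (u j *m P) -> a1 = a2.
Proof.
move=> hP [_ free _] a1 a2 k h1 h2.
have e : forall c : 'I_p -> R, \sum_j c j *: u j = (\row_j c j) *m (\matrix_(i < p) u i).
  by move=> c; rewrite mulmx_sum_row; apply: eq_bigr => j _; rewrite mxE rowK.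
have H : (\row_j a1 j) *m (\matrix_(i < p) u i) = (\row_j a2 j) *m (\matrix_(i < p) u i).
  apply: (can_inj (mulmxK hP)); rewrite -!e -h1 h2 mulmx_suml.
  by apply: eq_bigr => j _; rewrite scalemxAl.
move/(row_free_inj free): H => H; apply/funext => j.
by have := congr1 (fun r : 'rV_p => r 0 j) H; rewrite /= !mxE.
Qed.

Lemma part1 (R : realType) (n m p : nat) (u : nat -> 'rV[R]_n)
    (hbasis : prefix_basis u m p) (P : 'M[R]_n) (hP : P \in unitmx) :
  (forall (dH dPH : Mchoice R p),
      Mchoice_ok u m dH ->
      Mchoice_ok (fun k => u k *m P) m dPH ->
      LM u m dH = LM (fun k => u k *m P) m dPH).
Proof.
move=> dH dPH okH okPH.
have ha : forall k, (p <= k < m)%N -> mc_alpha dH k = mc_alpha dPH k.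
  move=> k km; case: okH => _ /(_ k km) /= [h1 _ _ _ _].
  case: okPH => _ /(_ k km) /= [h2 _ _ _ _].
  exact: (@alpha_eq R n m p u P hP hbasis (mc_alpha dH k) (mc_alpha dPH k) k h1 h2).
have -> : LM u m dH = \rank (Wsum u m dH) by [].
have -> : LM (fun k => u k *m P) m dPH = \rank (Wsum (fun k => u k *m P) m dPH) by [].
apply/eqP; rewrite eqn_leq; apply/andP; split.
  apply: leq_trans (mxrankM_maxl _ (invmx P)).
  apply: mxrankS; apply: (@Wsub R n m p _ _ (invmx P) dPH dH _ okPH okH) => [j _|k km].
    by rewrite mulmxK.
  by rewrite ha.
apply: leq_trans (mxrankM_maxl _ P).
apply: mxrankS; apply: (@Wsub R n m p _ _ P dH dPH _ okH okPH) => [j _|k km] //.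
by rewrite ha.
Qed.
Lemma img_closure (T : topologicalType) (f : T -> T) (A : set T) :
  continuous f -> f @` closure A `<=` closure (f @` A).
Proof.
move=> cf _ [x clx <-] B hB.
have : nbhs x (f @^-1` B) by exact: cf.
move=> /clx [a [Aa Ba]]; exists (f a); split => //; by exists a.
Qed.

Lemma closure_img (T : topologicalType) (f g : T -> T) (A : set T) :
  continuous f -> continuous g -> cancel f g -> cancel g f ->
  closure (f @` A) = f @` closure A.
Proof.
move=> cf cg fK gK; apply/seteqP; split; last exact: img_closure.
move=> y cly; exists (g y); last by rewrite gK.
have : closure (g @` (f @` A)) (g y) by apply: img_closure => //; exists y.
suff -> : g @` (f @` A) = A by [].
apply/seteqP; split => [_ [_ [a Aa <-] <-]|a Aa]; first by rewrite fK.
by exists (f a); [exists a | rewrite fK].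
Qed.

Lemma mulmx_cont (R : realType) n (Q : 'M[R]_n) : continuous (fun x : 'rV[R]_n => x *m Q).
Proof.
have -> : (fun x : 'rV[R]_n => x *m Q) = (fun x => \sum_(i <- index_enum 'I_n) x 0 i *: row i Q).
  by apply/funext => x; rewrite mulmx_sum_row.
elim: (index_enum 'I_n) => [|i s IH] x.
  have -> : (fun x : 'rV[R]_n => \sum_(i <- [::]) x 0 i *: row i Q) = fun=> 0.
    by apply/funext => y; rewrite big_nil.
  exact: cst_continuous.
have -> : (fun x : 'rV[R]_n => \sum_(j <- i :: s) x 0 j *: row j Q) =
    (fun x => x 0 i *: row i Q) \+ (fun x => \sum_(j <- s) x 0 j *: row j Q).
  by apply/funext => y; rewrite big_cons.
apply: (cvgD (F := nbhs x)); last exact: IH.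
apply: continuousZr_tmp; exact: coord_continuous.
Qed.

Lemma dimt_p_img (R : realType) n (G : set 'rV[R]_n) (P : 'M[R]_n) :
  P \in unitmx -> dimt_p ((fun x => x *m P) @` G) = dimt_p G.
Proof.
move=> hP; have fP : row_free P by rewrite row_free_unit.
have fP' : row_free (invmx P) by rewrite row_free_unit unitmx_inv.
apply: eq_bigl => r; apply/idP/idP => /asboolP [V [hV hr]]; apply/asboolP.
  exists (V *m invmx P); split; last by rewrite mxrankMfree.
  move=> v hv; have : (v *m P <= V)%MS.
    by rewrite -[V](mulmxKV hP) submxMr.
  move=> /hV [g Gg] /(can_inj (mulmxK hP)) <-; exact: Gg.
exists (V *m P); split; last by rewrite mxrankMfree.
move=> v hv; exists (v *m invmx P); last by rewrite mulmxKV.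
apply: hV; rewrite -[V](mulmxK hP); exact: submxMr.
Qed.

Lemma dimt_s_img (R : realType) n (G : set 'rV[R]_n) (P : 'M[R]_n) :
  P \in unitmx -> dimt_s ((fun x => x *m P) @` G) = dimt_s G.
Proof.
move=> hP; have fP : row_free P by rewrite row_free_unit.
have fP' : row_free (invmx P) by rewrite row_free_unit unitmx_inv.
apply: eq_bigl => r; apply/idP/idP => /asboolP [V [hV hr]]; apply/asboolP.
  exists (V *m invmx P); split; last by rewrite mxrankMfree.
  move=> g Gg; rewrite -[g](mulmxK hP); apply: submxMr; apply: hV; by exists g.
exists (V *m P); split; last by rewrite mxrankMfree.
by move=> _ [g Gg <-]; apply: submxMr; apply: hV.
Qed.

Lemma part2 (R : realType) (n m : nat) (u : nat -> 'rV[R]_n) (P : 'M[R]_n) (hP : P \in unitmx) :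
  cdim (closure (zspan u m : set 'rV[R]_n))
     = cdim (closure ((fun x => x *m P) @` zspan u m : set 'rV[R]_n)).
Proof.
rewrite (@closure_img _ (fun x : 'rV[R]_n => x *m P) (fun x => x *m invmx P)).
- by rewrite /cdim dimt_p_img // dimt_s_img.
- exact: mulmx_cont.
- exact: mulmx_cont.
- by move=> x; rewrite mulmxK.
- by move=> x; rewrite mulmxKV.
Qed.

Theorem lemma3p3 (R : realType) (n m p : nat) (u : nat -> 'rV[R]_n)
    (hbasis : prefix_basis u m p) (P : 'M[R]_n) (hP : P \in unitmx) :
  (forall (dH dPH : Mchoice R p),
      Mchoice_ok u m dH ->
      Mchoice_ok (fun k => u k *m P) m dPH ->
      LM u m dH = LM (fun k => u k *m P) m dPH)
  /\ cdim (closure (zspan u m : set 'rV[R]_n))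
     = cdim (closure ((fun x => x *m P) @` zspan u m : set 'rV[R]_n)).
Proof.
split; first exact: part1.
exact: part2.
Qed.
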